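(* Let $G$ be a connected graph, let $uv\in E(G)$, and let $G'$ be the graph obtained from $G$ by subdividing the edge $uv$ three times (i.e., replacing the edge $uv$ by a path $u x_1 x_2 x_3 v$ with three new vertices $x_1,x_2,x_3$). If $\gamma^{d}_2(G)\leq \frac{|V(G)|}{3}$, then $\gamma^{d}_2(G')\leq \frac{|V(G')|}{3}$.
   Context: All graphs are finite and simple. A set $S$ of vertices of a graph $G$ is a disjunctive dominating set of $G$ if every vertex not in $S$ is adjacent to a vertex of $S$ or has at least two vertices of $S$ at distance exactly $2$ from it in $G$. The disjunctive domination number $\gamma^{d}_2(G)$ is the minimum cardinality of a disjunctive dominating set of $G$. *)

(* Defs.v *)
From mathcomp Require Import all_boot.
Set Implicit Arguments. Unset Strict Implicit. Unset Printing Implicit Defensive.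

Section Graphs.
Variable T : finType.
Implicit Types (e : rel T) (S : {set T}).

Definition simple_graph e := symmetric e /\ irreflexive e.

Definition connected_graph e := forall x y : T, connect e x y.

Definition dist2 e (x y : T) : bool :=
  [&& x != y, ~~ e x y & [exists z, e x z && e z y]].

Definition disj_dom e S : bool :=
  [forall x, (x \notin S) ==>
     ([exists y in S, e x y] || (1 < #|[set y in S | dist2 e x y]|))].

(* minimum cardinality of a disjunctive dominating set (V(G) itself is one) *)
Definition gamma_d2 e : nat :=
  \big[minn/#|T|]_(S : {set T} | disj_dom e S) #|S|.
End Graphs.

(* Subdividing the edge uv three times: new vertices inr 0, inr 1, inr 2
   (= x1, x2, x3), path u - x1 - x2 - x3 - v, edge uv removed. *)
Definition subdiv3 (T : finType) (e : rel T) (u v : T) : rel (T + 'I_3) :=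
  fun a b =>
    match a, b with
    | inl a, inl b => e a b && ~~ (((a == u) && (b == v)) || ((a == v) && (b == u)))
    | inl a, inr i => ((a == u) && (val i == 0)) || ((a == v) && (val i == 2))
    | inr i, inl a => ((a == u) && (val i == 0)) || ((a == v) && (val i == 2))
    | inr i, inr j => ((val i).+1 == val j) || ((val j).+1 == val i)
    end.

(* Main.v *)
Require Import Defs.
From mathcomp Require Import all_boot.
Set Implicit Arguments. Unset Strict Implicit. Unset Printing Implicit Defensive.

Lemma ddP (G : finType) (f : rel G) (S : {set G}) :
  disj_dom f S <-> forall x, x \notin S -> (exists2 y, y \in S & f x y) \/
   (exists y1 y2, [/\ y1 \in S, y2 \in S, y1 != y2, dist2 f x y1 & dist2 f x y2]).
Proof.
split.
- move=> /forallP H x xS; move: (H x); rewrite xS /=.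
  case/orP => [/existsP [y /andP [yS xy]]|/card_gt1P [y1 [y2 [h1 h2 h3]]]].
  + by left; exists y.
  + right; exists y1, y2; move: h1 h2; rewrite !inE => /andP[? ?] /andP[? ?]; by split.
- move=> H; apply/forallP => x; apply/implyP => xS.
  case: (H x xS) => [[y yS xy]|[y1 [y2 [h1 h2 h3 h4 h5]]]].
  + by apply/orP; left; apply/existsP; exists y; rewrite yS xy.
  + apply/orP; right; apply/card_gt1P; exists y1, y2; by rewrite !inE h1 h2 h4 h5 h3.
Qed.

Lemma gamma_attained (G : finType) (f : rel G) :
  exists2 S : {set G}, disj_dom f S & #|S| = gamma_d2 f.
Proof.
rewrite /gamma_d2.
apply: (big_ind (fun m => exists2 S : {set G}, disj_dom f S & #|S| = m)).
- exists setT; last by rewrite cardsT.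
  by apply/forallP => x; rewrite inE.
- move=> a b [S1 h1 <-] [S2 h2 <-]; rewrite /minn; case: ltnP => _;
    [exists S1|exists S2] => //.
- by move=> S hS; exists S.
Qed.

Lemma bigmin_le_seq (I : eqType) (r : seq I) (P : pred I) (F : I -> nat) x j :
  j \in r -> P j -> \big[minn/x]_(i <- r | P i) F i <= F j.
Proof.
move=> + h; elim: r => [|a r IH] //; rewrite inE big_cons.
case/orP => [/eqP <-|/IH hr]; first by rewrite h geq_minl.
by case: (P a) => //; rewrite (leq_trans (geq_minr _ _)).
Qed.

Lemma gamma_le (G : finType) (f : rel G) S : disj_dom f S -> gamma_d2 f <= #|S|.
Proof.
have -> : gamma_d2 f = \big[minn/#|G|]_(S : {set G} | disj_dom f S) #|S| by [].
by move=> h; apply: bigmin_le_seq => //; rewrite mem_index_enum.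
Qed.

Definition o0 : 'I_3 := @Ordinal 3 0 isT.
Definition o1 : 'I_3 := @Ordinal 3 1 isT.
Definition o2 : 'I_3 := @Ordinal 3 2 isT.

Section Sub.
Variables (T : finType) (e : rel T) (u v : T).
Hypothesis uv : u != v.
Local Notation E := (subdiv3 e u v).
Definition uvp (a b : T) := ((a == u) && (b == v)) || ((a == v) && (b == u)).

Lemma E_ll a b : E (inl a) (inl b) = e a b && ~~ uvp a b. Proof. by []. Qed.

Lemma uvp_l a b : a != u -> a != v -> uvp a b = false.
Proof. by move=> /negbTE h1 /negbTE h2; rewrite /uvp h1 h2. Qed.
Lemma uvp_r a b : b != u -> b != v -> uvp a b = false.
Proof. by move=> /negbTE h1 /negbTE h2; rewrite /uvp h1 h2 !andbF. Qed.

Lemma dist2_pres a b : dist2 e a b ->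
  (forall z, e a z -> e z b -> ~~ uvp a z && ~~ uvp z b) -> dist2 E (inl a) (inl b).
Proof.
case/and3P => ab nab /existsP [z /andP [az zb]] H.
have /andP [h1 h2] := H z az zb.
apply/and3P; split.
- by apply: contra ab => /eqP [->].
- by rewrite E_ll negb_and nab.
- by apply/existsP; exists (inl z); rewrite !E_ll az zb h1 h2.
Qed.

Definition Sp (S : {set T}) (k : 'I_3) : {set T + 'I_3} := inl @: S :|: [set inr k].

Lemma mem_l S k w : (inl w \in Sp S k) = (w \in S).
Proof. by rewrite !inE mem_imset ?orbF //; move=> a b [->]. Qed.

Lemma mem_r S k i : (inr i \in Sp S k) = (i == k).
Proof.
rewrite !inE; case: (boolP (inr i \in _)) => //= /imsetP [y _] //.
Qed.

Lemma card_Sp S k : #|Sp S k| <= #|S| + 1.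
Proof.
rewrite /Sp cardsU cards1 (leq_trans (leq_subr _ _)) //.
by rewrite leq_add2r leq_imset_card.
Qed.

Lemma d2_o2 w : w != u -> w != v -> e w v -> dist2 E (inl w) (inr o2).
Proof.
move=> wu wv wev; apply/and3P; split => //.
- by rewrite /= (negbTE wv) (negbTE wu).
- apply/existsP; exists (inl v); rewrite E_ll wev uvp_l //=.
  by rewrite eqxx orbT.
Qed.

Lemma d2_o0 w : w != u -> w != v -> e w u -> dist2 E (inl w) (inr o0).
Proof.
move=> wu wv weu; apply/and3P; split => //.
- by rewrite /= (negbTE wv) (negbTE wu).
- apply/existsP; exists (inl u); rewrite E_ll weu uvp_l //=.
  by rewrite eqxx.
Qed.

Lemma case1 S : disj_dom e S -> u \in S -> v \in S -> disj_dom E (Sp S o1).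
Proof.
move=> /ddP dS uS vS; apply/ddP => -[w|i]; last first.
  rewrite mem_r; case: i => -[|[|[|m]]] Hm //= _; left.
  - by exists (inr o1); rewrite ?mem_r.
  - by exists (inr o1); rewrite ?mem_r.
rewrite mem_l => wS.
have wu : w != u by apply: contraNneq wS => ->.
have wv : w != v by apply: contraNneq wS => ->.
case: (boolP (e w u)) => weu.
  by left; exists (inl u); rewrite ?mem_l // E_ll weu uvp_l.
case: (boolP (e w v)) => wev.
  by left; exists (inl v); rewrite ?mem_l // E_ll wev uvp_l.
case: (dS w wS) => [[y yS wy]|[y1 [y2 [h1 h2 h3 h4 h5]]]].
  by left; exists (inl y); rewrite ?mem_l // E_ll wy uvp_l.
have P y : dist2 e w y -> dist2 E (inl w) (inl y).
  move=> d; apply: dist2_pres => // z wz zy; rewrite uvp_l //=.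
  rewrite /uvp; apply/negP => /orP [] /andP [/eqP zu _]; move: wz;
    rewrite zu => h; [by rewrite h in weu|by rewrite h in wev].
right; exists (inl y1), (inl y2); split; rewrite ?mem_l ?P //;
  by apply: contra h3 => /eqP [->].
Qed.

Lemma case2 S : disj_dom e S -> u \in S -> v \notin S -> disj_dom E (Sp S o2).
Proof.
move=> /ddP dS uS vS; apply/ddP => -[w|i]; last first.
  rewrite mem_r; case: i => -[|[|[|m]]] Hm //= _; left.
  - by exists (inl u); rewrite ?mem_l //= eqxx.
  - by exists (inr o2); rewrite ?mem_r.
rewrite mem_l => wS.
have wu : w != u by apply: contraNneq wS => ->.
case: (eqVneq w v) => [->|wv].
  by left; exists (inr o2); rewrite ?mem_r //= eqxx orbT.
case: (dS w wS) => [[y yS wy]|[y1 [y2 [h1 h2 h3 h4 h5]]]].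
  by left; exists (inl y); rewrite ?mem_l // E_ll wy uvp_l.
have P y : y \in S -> dist2 e w y -> dist2 E (inl w) (inl y) \/ (y = u /\ e w v).
  move=> yS d.
  have yv : y != v by apply: contraNneq vS => <-.
  case: (boolP [exists z, [&& e w z, e z y & uvp z y]]).
    case/existsP => z /and3P [wz zy]; rewrite /uvp (negbTE yv) andbF /=.
    by case/andP => /eqP zv /eqP yu; right; split => //; rewrite -zv.
  move=> H; left; apply: dist2_pres => // z wz zy; rewrite uvp_l //=.
  by apply: contra H => h; apply/existsP; exists z; rewrite wz zy h.
case: (P y1 h1 h4) => [d1|[y1u wev]]; case: (P y2 h2 h5) => [d2|[y2u wev']].
- right; exists (inl y1), (inl y2); split; rewrite ?mem_l //;
  by apply: contra h3 => /eqP [->].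
- right; exists (inl y1), (inr o2); split; rewrite ?mem_l ?mem_r //.
  by apply: d2_o2.
- right; exists (inr o2), (inl y2); split; rewrite ?mem_l ?mem_r //.
  by apply: d2_o2.
- by rewrite y1u y2u eqxx in h3.
Qed.

Lemma case3 S : disj_dom e S -> u \notin S -> v \in S -> disj_dom E (Sp S o0).
Proof.
move=> /ddP dS uS vS; apply/ddP => -[w|i]; last first.
  rewrite mem_r; case: i => -[|[|[|m]]] Hm //= _; left.
  - by exists (inr o0); rewrite ?mem_r.
  - by exists (inl v); rewrite ?mem_l //= eqxx orbT.
rewrite mem_l => wS.
have wv : w != v by apply: contraNneq wS => ->.
case: (eqVneq w u) => [->|wu].
  by left; exists (inr o0); rewrite ?mem_r //= eqxx.
case: (dS w wS) => [[y yS wy]|[y1 [y2 [h1 h2 h3 h4 h5]]]].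
  by left; exists (inl y); rewrite ?mem_l // E_ll wy uvp_l.
have P y : y \in S -> dist2 e w y -> dist2 E (inl w) (inl y) \/ (y = v /\ e w u).
  move=> yS d.
  have yu : y != u by apply: contraNneq uS => <-.
  case: (boolP [exists z, [&& e w z, e z y & uvp z y]]).
    case/existsP => z /and3P [wz zy]; rewrite /uvp (negbTE yu) andbF orbF /=.
    by case/andP => /eqP zu /eqP yv; right; split => //; rewrite -zu.
  move=> H; left; apply: dist2_pres => // z wz zy; rewrite uvp_l //=.
  by apply: contra H => h; apply/existsP; exists z; rewrite wz zy h.
case: (P y1 h1 h4) => [d1|[y1v weu]]; case: (P y2 h2 h5) => [d2|[y2v weu']].
- right; exists (inl y1), (inl y2); split; rewrite ?mem_l //;
  by apply: contra h3 => /eqP [->].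
- right; exists (inl y1), (inr o0); split; rewrite ?mem_l ?mem_r //.
  by apply: d2_o0.
- right; exists (inr o0), (inl y2); split; rewrite ?mem_l ?mem_r //.
  by apply: d2_o0.
- by rewrite y1v y2v eqxx in h3.
Qed.

Lemma case4_old S k : disj_dom e S -> u \notin S -> v \notin S ->
  ([exists s in S, e v s] -> [exists s in S, e u s] \/ k = o0) ->
  ([exists s in S, e u s] -> [exists s in S, e v s] \/ k = o2) ->
  forall w, inl w \notin Sp S k -> (exists2 y, y \in Sp S k & E (inl w) y) \/
   (exists y1 y2, [/\ y1 \in Sp S k, y2 \in Sp S k, y1 != y2,
        dist2 E (inl w) y1 & dist2 E (inl w) y2]).
Proof.
move=> /ddP dS uS vS Hu Hv w; rewrite mem_l => wS.
have nuv y : y \in S -> (y != u) && (y != v).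
  by move=> yS; apply/andP; split; [apply: contraNneq uS|apply: contraNneq vS] => <-.
have adj s : s \in S -> e w s -> exists2 y, y \in Sp S k & E (inl w) y.
  move=> sS ws; exists (inl s); rewrite ?mem_l // E_ll ws.
  by case/andP: (nuv s sS) => ? ?; rewrite uvp_r.
have pres (hu : w = u -> ~~ [exists s in S, e v s])
          (hv : w = v -> ~~ [exists s in S, e u s]) y :
    y \in S -> dist2 e w y -> dist2 E (inl w) (inl y).
  move=> yS d; apply: dist2_pres => // z wz zy.
  case/andP: (nuv y yS) => ? ?; rewrite (uvp_r z) // andbT.
  rewrite /uvp; apply/negP => /orP [] /andP [/eqP wu /eqP zv].
  - by move: (hu wu); rewrite -zv; case/existsP; exists y; rewrite yS.
  - by move: (hv wu); rewrite -zv; case/existsP; exists y; rewrite yS.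
have gen (hu : w = u -> ~~ [exists s in S, e v s])
          (hv : w = v -> ~~ [exists s in S, e u s]) :
  (exists2 y, y \in Sp S k & E (inl w) y) \/
   (exists y1 y2, [/\ y1 \in Sp S k, y2 \in Sp S k, y1 != y2,
        dist2 E (inl w) y1 & dist2 E (inl w) y2]).
  case: (dS w wS) => [[y yS wy]|[y1 [y2 [h1 h2 h3 h4 h5]]]].
    by left; apply: (adj y).
  right; exists (inl y1), (inl y2); split; rewrite ?mem_l ?(pres hu hv) //;
  by apply: contra h3 => /eqP [->].
case: (eqVneq w u) => [wu|wu].
  case: (boolP [exists s in S, e u s]) => [/existsP [s /andP [sS us]]|nu].
    by left; apply: (adj s) => //; rewrite wu.
  case: (boolP [exists s in S, e v s]) => [dv|nv].
    case: (Hu dv) => [h|->]; first by rewrite h in nu.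
    by left; exists (inr o0); rewrite ?mem_r //= wu eqxx.
  apply: gen => // wv; by move: uv; rewrite -wu wv eqxx.
case: (eqVneq w v) => [wv|wv].
  case: (boolP [exists s in S, e v s]) => [/existsP [s /andP [sS vs]]|nv].
    by left; apply: (adj s) => //; rewrite wv.
  case: (boolP [exists s in S, e u s]) => [du|nu].
    case: (Hv du) => [h|->]; first by rewrite h in nv.
    by left; exists (inr o2); rewrite ?mem_r //= wv eqxx orbT.
  by apply: gen => // wu'; rewrite wu' eqxx in wu.
by apply: gen => // h; [rewrite h eqxx in wu|rewrite h eqxx in wv].
Qed.

Lemma d2_o0_s s : s != u -> s != v -> e u s -> dist2 E (inr o0) (inl s).
Proof.
move=> su sv us; apply/and3P; split => //.
- by rewrite /= (negbTE su) (negbTE sv).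
- apply/existsP; exists (inl u); rewrite E_ll us uvp_r //=.
  by rewrite eqxx.
Qed.

Lemma d2_o2_s s : s != u -> s != v -> e v s -> dist2 E (inr o2) (inl s).
Proof.
move=> su sv vs; apply/and3P; split => //.
- by rewrite /= (negbTE su) (negbTE sv).
- apply/existsP; exists (inl v); rewrite E_ll vs uvp_r //=.
  by rewrite eqxx orbT.
Qed.

Lemma case4 S : disj_dom e S -> u \notin S -> v \notin S ->
  exists k, disj_dom E (Sp S k).
Proof.
move=> dS uS vS.
have nuv y : y \in S -> (y != u) && (y != v).
  by move=> yS; apply/andP; split; [apply: contraNneq uS|apply: contraNneq vS] => <-.
case: (boolP [exists s in S, e u s]) => du; case: (boolP [exists s in S, e v s]) => dv.
- exists o1; apply/ddP => -[w|i]; first by apply: case4_old => // _; left.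
  rewrite mem_r; case: i => -[|[|[|m]]] Hm //= _; left.
  + by exists (inr o1); rewrite ?mem_r.
  + by exists (inr o1); rewrite ?mem_r.
- exists o2; apply/ddP => -[w|i].
    by apply: case4_old => // h; [rewrite h in dv|right].
  rewrite mem_r; case: i => -[|[|[|m]]] Hm //= _.
  + case/existsP: du => s /andP [sS us]; case/andP: (nuv s sS) => su sv.
    right; exists (inr o2), (inl s); split; rewrite ?mem_r ?mem_l //.
    * by apply/and3P; split => //; apply/existsP; exists (inr o1).
    * exact: d2_o0_s.
  + by left; exists (inr o2); rewrite ?mem_r.
- exists o0; apply/ddP => -[w|i].
    by apply: case4_old => // h; [right|rewrite h in du].
  rewrite mem_r; case: i => -[|[|[|m]]] Hm //= _.
  + by left; exists (inr o0); rewrite ?mem_r.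
  + case/existsP: dv => s /andP [sS vs]; case/andP: (nuv s sS) => su sv.
    right; exists (inr o0), (inl s); split; rewrite ?mem_r ?mem_l //.
    * by apply/and3P; split => //; apply/existsP; exists (inr o1).
    * exact: d2_o2_s.
- exists o1; apply/ddP => -[w|i].
    by apply: case4_old => // h; [rewrite h in dv|rewrite h in du].
  rewrite mem_r; case: i => -[|[|[|m]]] Hm //= _; left.
  + by exists (inr o1); rewrite ?mem_r.
  + by exists (inr o1); rewrite ?mem_r.
Qed.

End Sub.

Theorem lemma2p3 (T : finType) (e : rel T) (u v : T) :
  simple_graph e -> connected_graph e -> e u v ->
  3 * gamma_d2 e <= #|T| ->
  3 * gamma_d2 (subdiv3 e u v) <= #|{: T + 'I_3}|.
Proof.
move=> [_ irr] _ euv Hg.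
have uv : u != v by apply: contraTneq euv => ->; rewrite irr.
have [S dS cS] := gamma_attained e.
have [k dk] : exists k, disj_dom (subdiv3 e u v) (Sp S k).
  case: (boolP (u \in S)) => uS; case: (boolP (v \in S)) => vS.
  - by exists o1; apply: case1.
  - by exists o2; apply: case2.
  - by exists o0; apply: case3.
  - exact: case4.
rewrite card_sum card_ord.
apply: leq_trans (_ : 3 * (#|S| + 1) <= _).
  by rewrite leq_mul2l /= (leq_trans (gamma_le dk)) ?card_Sp.
by rewrite mulnDr muln1 leq_add2r cS.
Qed.
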